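(* The hereditary class property $\Sigma=$ ''weakly sparse'' — the set of hereditary classes $\mathscr C$ for which there is an integer $t$ such that no graph in $\mathscr C$ contains $K_{t,t}$ as a subgraph — is a decomposition horizon, i.e. $\Sigma^\ast=\Sigma$.
   Context: Graphs are finite and simple; $K_{t,t}$ is the complete bipartite graph with both parts of size $t$. A hereditary class is a class closed under isomorphism and induced subgraphs; a hereditary class property is a set $\Pi$ of hereditary classes closed under passing to hereditary subclasses. For non-decreasing $f:\mathbb N\to\mathbb N$ and positive integer $p$, $\mathscr C$ has an $f$-bounded $\Pi$-decomposition with parameter $p$ if there is $\mathscr D_p\in\Pi$ such that every $G\in\mathscr C$ has a partition $V_1,\dots,V_N$ of $V(G)$ with $N\le f(|G|)$ and $G[V_{i_1}\cup\dots\cup V_{i_p}]\in\mathscr D_p$ for all $i_1,\dots,i_p\in[N]$. $\Pi^\ast$ is the set of hereditary classes that, for every positive integer $p$, have such a decomposition for some non-decreasing $f$ with $f(n)=n^{o(1)}$. $\Pi$ is a decomposition horizon if $\Pi^\ast=\Pi$. *)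

(* Defs.v *)
From Stdlib Require Import Reals.
From mathcomp Require Import all_boot.

Set Implicit Arguments.
Unset Strict Implicit.
Unset Printing Implicit Defensive.

Record graph := Graph {
  gV : finType;
  gadj : rel gV;
  gsym : symmetric gadj;
  girr : irreflexive gadj }.

Definition order (G : graph) : nat := #|gV G|.

Definition induced_emb (H G : graph) : Prop :=
  exists f : gV H -> gV G,
    injective f /\ forall x y, @gadj G (f x) (f y) = @gadj H x y.

Definition gclass := graph -> Prop.

Definition hereditary (C : gclass) : Prop :=
  forall G H, C G -> induced_emb H G -> C H.

Definition class_property (Pi : gclass -> Prop) : Prop :=
  (forall C, Pi C -> hereditary C) /\
  (forall C C', Pi C -> hereditary C' -> (forall G, C' G -> C G) -> Pi C').

Section Induced.
Variables (G : graph) (U : {set gV G}).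
Definition ind_V : finType := {x : gV G | x \in U}.
Definition ind_adj : rel ind_V := fun x y => @gadj G (val x) (val y).
Lemma ind_sym : symmetric ind_adj.
Proof. by move=> x y; rewrite /ind_adj (@gsym G). Qed.
Lemma ind_irr : irreflexive ind_adj.
Proof. by move=> x; rewrite /ind_adj (@girr G). Qed.
Definition induced : graph := Graph ind_sym ind_irr.
End Induced.

(* f(n) = n^{o(1)}: for every eps > 0, f(n) <= n^eps for all large n *)
Definition subpoly (f : nat -> nat) : Prop :=
  forall eps : R, Rlt 0 eps ->
    exists n0 : nat, forall n : nat, n0 <= n ->
      Rle (INR (f n)) (Rpower (INR n) eps).

(* C has an f-bounded Pi-decomposition with parameter p.
   A partition V_1..V_N of V(G) is given by a colouring c : V(G) -> 'I_N
   (V_i = c^-1(i)); a choice of indices i_1..i_p is a map 'I_p -> 'I_N. *)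
Definition has_decomposition (Pi : gclass -> Prop) (C : gclass)
    (f : nat -> nat) (p : nat) : Prop :=
  exists D : gclass, Pi D /\
    forall G : graph, C G ->
      exists (N : nat) (c : gV G -> 'I_N),
        N <= f (order G) /\
        forall idx : 'I_p -> 'I_N,
          D (induced [set v | c v \in [set idx k | k : 'I_p]]).

Definition star (Pi : gclass -> Prop) : gclass -> Prop :=
  fun C => hereditary C /\
    forall p : nat, 0 < p ->
      exists f : nat -> nat, {homo f : m n / m <= n} /\ subpoly f /\
        has_decomposition Pi C f p.

Definition contains_Ktt (t : nat) (G : graph) : Prop :=
  exists a b : 'I_t -> gV G,
    injective a /\ injective b /\
    (forall i j, a i != b j) /\
    (forall i j, @gadj G (a i) (b j)).

Definition weakly_sparse (C : gclass) : Prop :=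
  hereditary C /\ exists t : nat, forall G, C G -> ~ contains_Ktt t G.

Definition decomposition_horizon (Pi : gclass -> Prop) : Prop :=
  forall C, star Pi C <-> Pi C.

(* Main.v *)
Require Import Defs.
From Stdlib Require Import Reals Lra Psatz.
From mathcomp Require Import all_boot.
From mathcomp Require Import zify.

Set Implicit Arguments.
Unset Strict Implicit.
Unset Printing Implicit Defensive.

Lemma lift_Ktt (G : graph) (U : {set gV G}) t (a b : 'I_t -> gV G)
  (Ha : forall i, a i \in U) (Hb : forall j, b j \in U) :
  injective a -> injective b -> (forall i j, a i != b j) ->
  (forall i j, gadj (a i) (b j)) -> contains_Ktt t (induced U).
Proof.
move=> Ia Ib Dab Eab.
exists (fun i => exist (fun x => x \in U) (a i) (Ha i)).
exists (fun j => exist (fun x => x \in U) (b j) (Hb j)).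
split; first by move=> i j /(congr1 val) /= /Ia.
split; first by move=> i j /(congr1 val) /= /Ib.
split; last by move=> i j; exact: Eab.
move=> i j; apply/negP => /eqP /(congr1 val) /= E.
by move: (Dab i j); rewrite E eqxx.
Qed.

Lemma pigeon s N t (g : 'I_s -> 'I_N) : 0 < s -> t * N <= s ->
  exists k, t <= #|[set i | g i == k]|.
Proof.
move=> s0 tN.
case: (boolP [exists k, t <= #|[set i | g i == k]|]).
  by move/existsP.
rewrite negb_exists => /forallP H; exfalso.
have E : s = \sum_(k < N) #|[set i | g i == k]|.
  rewrite -{1}(card_ord s) -sum1_card (partition_big g predT) //=.
  apply: eq_bigr => k _; rewrite sum1_card cardsE; apply: eq_card => i.
  by [].
have : s <= \sum_(k < N) (t.-1).
  rewrite {1}E; apply: leq_sum => k _; move: (H k); rewrite -ltnNge; lia.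
rewrite sum_nat_const card_ord => h.
case: t H tN h => [|t] H tN h.
  by move: (H (g (Ordinal s0))); rewrite leq0n.
rewrite /= in h; nia.
Qed.

Lemma key (H : graph) s t N (c : gV H -> 'I_N) (a b : 'I_s -> gV H) :
  0 < s -> t * N <= s ->
  injective a -> injective b -> (forall i j, a i != b j) ->
  (forall i j, gadj (a i) (b j)) ->
  exists idx : 'I_2 -> 'I_N,
    contains_Ktt t (induced [set v | c v \in [set idx k | k : 'I_2]]).
Proof.
move=> s0 tN Ia Ib Dab Eab.
have [k1 h1] := pigeon (fun i => c (a i)) s0 tN.
have [k2 h2] := pigeon (fun i => c (b i)) s0 tN.
set A := [set i | c (a i) == k1] in h1.
set B := [set i | c (b i) == k2] in h2.
pose idx := fun k : 'I_2 => if val k == 0 then k1 else k2.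
exists idx.
pose a2 := fun i : 'I_t => a (enum_val (widen_ord h1 i)).
pose b2 := fun i : 'I_t => b (enum_val (widen_ord h2 i)).
have WI : forall n m (h : n <= m), injective (@widen_ord n m h).
  by move=> n m h x y /(congr1 val) /= /val_inj.
apply: (@lift_Ktt _ _ _ a2 b2).
- move=> i; rewrite inE; apply/imsetP; exists ord0 => //.
  have := enum_valP (widen_ord h1 i); rewrite inE /a2 /idx /= => /eqP ->.
  done.
- move=> i; rewrite inE; apply/imsetP; exists (Ordinal (isT : 1 < 2)) => //.
  have := enum_valP (widen_ord h2 i); rewrite inE /b2 /idx /= => /eqP ->.
  done.
- by move=> i j /Ia /enum_val_inj /WI.
- by move=> i j /Ib /enum_val_inj /WI.
- by move=> i j; apply: Dab.
- by move=> i j; apply: Eab.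
Qed.

Lemma nat_bound (t n0 : nat) (f : nat -> nat) :
  (forall n, n0 <= n -> Rle (INR (f n)) (Rpower (INR n) (/2))) ->
  exists s, 0 < s /\ t * f (2 * s) <= s.
Proof.
move=> Hf.
exists (n0 + 2 * t * t + 1); split; first lia.
set s := n0 + 2 * t * t + 1.
have hs : n0 <= 2 * s by rewrite /s; lia.
have := Hf _ hs.
have sp : Rlt 0 (INR (2 * s)) by apply: lt_0_INR; apply/ltP; rewrite /s; lia.
rewrite Rpower_sqrt //.
have sq := sqrt_sqrt (INR (2 * s)) (Rlt_le _ _ sp).
have sq0 := sqrt_pos (INR (2 * s)).
set y := sqrt _ in sq sq0 *.
have hs2 : Rle (Rmult (Rmult 2 (INR t)) (INR t)) (INR s).
  have : (2 * t * t <= s)%coq_nat by apply/leP; rewrite /s; lia.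
  move/le_INR; rewrite !mult_INR /=. lra.
have e2 : INR (2 * s) = Rmult 2 (INR s) by rewrite mult_INR.
rewrite e2 in sq.
have t0 := pos_INR t.
have yt : Rle (Rmult 2 (INR t)) y.
  apply: Rnot_lt_le => hlt; nra.
move=> hf.
have : Rle (INR (t * f (2 * s))) (INR s).
  rewrite mult_INR.
  have f0 := pos_INR (f (2 * s)).
  nra.
by move/INR_le/leP.
Qed.

Theorem mainTheorem5 : decomposition_horizon weakly_sparse.
Proof.
move=> C; split.
- move=> [hC Hp].
  have [f [mono [sub [D [[hD [t Ht]] Hdec]]]]] := Hp 2 isT.
  have [n0 Hn0] := sub (Rinv 2) ltac:(lra).
  have [s [s0 hs]] := nat_bound t Hn0.
  split => //; exists s => G CG [a [b [Ia [Ib [Dab Eab]]]]].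
  pose U := [set x | (x \in codom a) || (x \in codom b)].
  have CH : C (induced U).
    apply: hC CG _; exists val; split; first exact: val_inj.
    by [].
  have Ha : forall i, a i \in U by move=> i; rewrite inE codom_f.
  have Hb : forall i, b i \in U by move=> i; rewrite inE codom_f orbT.
  pose aH := fun i => exist (fun x => x \in U) (a i) (Ha i).
  pose bH := fun i => exist (fun x => x \in U) (b i) (Hb i).
  have [N [c [HN HD]]] := Hdec _ CH.
  have oH : Defs.order (induced U) <= 2 * s.
    rewrite /Defs.order /= /ind_V card_sig.
    apply: (leq_trans (n := #|codom a| + #|codom b|)).
      rewrite -cardUI; apply: leq_trans (leq_addr _ _).
      by apply: subset_leq_card; apply/subsetP => x; rewrite !inE.
    by rewrite !card_codom // card_ord; lia.
  have tN : t * N <= s.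
    apply: leq_trans hs; rewrite leq_mul2l; apply/orP; right.
    exact: leq_trans HN (mono _ _ oH).
  have [idx K] := @key (induced U) s t N c aH bH s0 tN
    ltac:(by move=> i j /(congr1 val) /= /Ia)
    ltac:(by move=> i j /(congr1 val) /= /Ib)
    ltac:(move=> i j; apply/negP => /eqP /(congr1 val) /= E;
          by move: (Dab i j); rewrite E eqxx)
    ltac:(by move=> i j; apply: Eab).
  exact: Ht _ (HD idx) K.
- move=> [hC [t Ht]]; split => //.
  move=> p p0; exists (fun _ => 1); split; first by [].
  split.
    move=> eps he; exists 1%N => n hn.
    change (Rle 1 (Rpower (INR n) eps)); rewrite -(Rpower_O (INR n)); last by apply: lt_0_INR; apply/ltP.
    apply: Rle_Rpower; last lra.
    by rewrite -/(INR 1); apply: le_INR; apply/leP.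
  exists C; split; first by split => //; exists t.
  move=> G CG; exists 1%N, (fun _ => ord0); split => // idx.
  apply: hC CG _; exists val; split; first exact: val_inj.
  by [].
Qed.
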